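(* Let $h\in\mathcal H$ and $d=\operatorname{hdepth}(h)$. Then for all integers $k,d'$ with $0\le k\le d'\le d$ we have $\beta_k^{d'}(h)\ge \beta_k^d(h)\ge 0$.
   Context: $\mathcal H$ denotes the set of nonzero functions $h:\mathbb Z\to\mathbb Z_{\ge 0}$ such that $h(j)=0$ for all sufficiently negative $j$. For $h\in\mathcal H$ and integers $k\le d$, set $\beta_k^d(h)=\sum_{j\le k}(-1)^{k-j}\binom{d-j}{k-j}h(j)$. The (arithmetic) Hilbert depth of $h$ is $\operatorname{hdepth}(h)=\max\{d\in\mathbb Z:\ \beta_k^d(h)\ge 0\text{ for all integers }k\le d\}$. *)

(* Defs.v *)
From mathcomp Require Import all_boot all_order all_algebra.
Set Implicit Arguments. Unset Strict Implicit. Unset Printing Implicit Defensive.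
Import Order.TTheory GRing.Theory Num.Theory.
Local Open Scope ring_scope.

(* Membership in the class H: h : Z -> Z_{>=0} (codomain nat), nonzero,
   and vanishing below some integer. *)
Definition in_H (h : int -> nat) : Prop :=
  (exists j, h j <> 0%N) /\ (exists m : int, forall j, j < m -> h j = 0%N).

(* beta_k^d(h) = sum_{j <= k} (-1)^(k-j) C(d-j, k-j) h(j), computed as the
   finite sum over m <= j <= k, where m is any integer with h j = 0 for j < m
   (the value does not depend on such m).  Intended for k <= d. *)
Definition beta_term (h : int -> nat) (k d j : int) : int :=
  (-1) ^+ absz (k - j) * (binomial (absz (d - j)) (absz (k - j)))%:Z * (h j)%:Z.

Definition beta (m : int) (h : int -> nat) (k d : int) : int :=
  if m <= k then \sum_(i < absz (k - m + 1)) beta_term h k d (m + i%:Z)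
  else 0.

Definition depth_ok (m : int) (h : int -> nat) (d : int) : Prop :=
  forall k : int, k <= d -> 0 <= beta m h k d.

Definition is_hdepth (m : int) (h : int -> nat) (d : int) : Prop :=
  depth_ok m h d /\ (forall d' : int, depth_ok m h d' -> d' <= d).

(* Main.v *)
Require Import Defs.
From mathcomp Require Import all_boot all_order all_algebra.
From mathcomp Require Import zify ring.
Import Order.TTheory GRing.Theory Num.Theory.
Local Open Scope ring_scope.

Definition B (h : int -> nat) (m : int) (n t : nat) : int :=
  \sum_(i < n.+1) (-1) ^+ (n - i) * ('C(t + (n - i), n - i))%:Z * (h (m + i%:Z))%:Z.

Lemma betaB h m n t : beta m h (m + n%:Z) (m + n%:Z + t%:Z) = B h m n t.
Proof.
rewrite /beta ifT; last by lia.
rewrite (_ : absz (m + n%:Z - m + 1)%R = n.+1); last by lia.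
apply: eq_bigr => i _; rewrite /beta_term.
have hi := ltn_ord i.
rewrite (_ : absz (m + n%:Z + t%:Z - (m + i%:Z))%R = (t + (n - i))%N); last by lia.
rewrite (_ : absz (m + n%:Z - (m + i%:Z))%R = (n - i)%N); last by lia.
by [].
Qed.

Lemma Blast h m n t : B h m n.+1 t =
  \sum_(i < n.+1) (-1) ^+ (n.+1 - i) * ('C(t + (n.+1 - i), n.+1 - i))%:Z
      * (h (m + i%:Z))%:Z + (h (m + n.+1%:Z))%:Z.
Proof.
by rewrite /B big_ord_recr /= subnn expr0 addn0 bin0 !mul1r.
Qed.

Lemma Brec h m n t : B h m n.+1 t = B h m n.+1 t.+1 + B h m n t.+1.
Proof.
rewrite !Blast /B addrAC -big_split /=; congr (_ + _).
apply: eq_bigr => i _.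
have hi := ltn_ord i.
rewrite subSn; last by rewrite -ltnS.
rewrite addSnnS.
rewrite [(t.+1 + (n - i))%N]addSnnS (addnS t (n - i).+1) binS PoszD exprS.
ring.
Qed.

Lemma B0 h m t t' : B h m 0 t = B h m 0 t'.
Proof. by rewrite /B !big_ord1 /= !subnn !addn0 !bin0. Qed.

Lemma Bmono h m (D : nat) (Hd : forall n, (n <= D)%N -> 0 <= B h m n (D - n)) :
  forall n t, (t + n <= D)%N -> B h m n (D - n) <= B h m n t.
Proof.
elim=> [|n IHn] t.
  by move=> _; rewrite (B0 h m t (D - 0)).
move Hg: (D - n.+1 - t)%N => g; elim: g t Hg => [|g IHg] t Hg Ht.
  by rewrite (_ : t = (D - n.+1)%N) ?lexx //; lia.
rewrite [B h m n.+1 t]Brec.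
have h1 := IHg t.+1 ltac:(lia) ltac:(lia).
have h2 := IHn t.+1 ltac:(lia).
have h3 := Hd n ltac:(lia).
lia.
Qed.

Theorem proposition1p3 (h : int -> nat) (m : int)
  (hnz : exists j, h j <> 0%N)
  (hm : forall j : int, j < m -> h j = 0%N)
  (d : int) (hd : is_hdepth m h d) (k d' : int) :
  0 <= k -> k <= d' -> d' <= d ->
  beta m h k d <= beta m h k d' /\ 0 <= beta m h k d.
Proof.
move=> _ hkd' hd'd.
have hok := hd.1.
case: (ltrP k m) => hkm.
  by rewrite /beta !ifF //; apply/negbTE; rewrite -ltNge.
set n := absz (k - m); set t := absz (d' - k); set D := absz (d - m).
have Ek : k = m + n%:Z by lia.
have Ed' : d' = m + n%:Z + t%:Z by lia.
have Ed : d = m + n%:Z + (D - n)%N%:Z by lia.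
have Hd : forall n0, (n0 <= D)%N -> 0 <= B h m n0 (D - n0).
  move=> n0 hn0.
  have := hok (m + n0%:Z) ltac:(lia).
  by rewrite (_ : d = m + n0%:Z + (D - n0)%N%:Z) ?betaB //; lia.
rewrite Ek Ed' Ed !betaB; split.
  by apply: Bmono => //; lia.
by apply: Hd; lia.
Qed.
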